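(* Let $d\in\mathbb N\cup\{\infty\}$ and let ${\boldsymbol\gamma}$ be product weights, $\gamma_u=\prod_{j\in u}\gamma_j$. Then $(\Delta_v{\boldsymbol\gamma})_u=\gamma_u\prod_{j\in v}(1-\gamma_j)$ for all $u,v\in\mathcal U_d$ with $u\cap v=\emptyset$, and ${\boldsymbol\gamma}\in\mathcal M_d$ if and only if $0\le\gamma_j\le1$ for all $j\in[d]$. If moreover $d=\infty$ and ${\boldsymbol\gamma}\in\mathcal M_d$, then: (a) ${\boldsymbol\gamma}\in\mathcal N_d$ iff $\lim_{j\to\infty}\gamma_j=0$; (b) for any $C>0$, $T^\downarrow_{d,C}{\boldsymbol\gamma}=\mathbf 0$ iff $\sum_{j=1}^\infty\gamma_j=\infty$; (c) ${\boldsymbol\gamma}\in\mathcal A_d$ iff $\sum_{j=1}^\infty\gamma_j<\infty$ iff ${\boldsymbol\gamma}\in\mathcal P_d$.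
   Context: Write $[d]=\{1,\dots,d\}$ if $d\in\mathbb N$ and $[d]=\mathbb N$ if $d=\infty$; $[s]=\{1,\dots,s\}$ for $s\in\mathbb N$. Let $\mathcal U_d$ be the set of all finite subsets of $[d]$. Weights are families ${\boldsymbol\gamma}=(\gamma_u)_{u\in\mathcal U_d}$ of non-negative reals ($\mathcal W_d$); inequalities and limits of families are componentwise, $\mathbf 0$ is the zero family. Product weights: $\gamma_u=\prod_{j\in u}\gamma_j$ for a non-increasing sequence $(\gamma_j)_{j\in[d]}$ of non-negative reals, with $\gamma_\emptyset=1$. Difference operator: $(\Delta_v{\boldsymbol\gamma})_u=\sum_{w\subseteq v}(-1)^{|w|}\gamma_{u\cup w}$. $\mathcal M_d$: weights with $\Delta_v{\boldsymbol\gamma}\ge\mathbf 0$ for all $v\in\mathcal U_d$. For $d=\infty$ and $C>0$: $(T^\downarrow_{d,C}{\boldsymbol\gamma})_u=C^{-2|u|}\lim_{s\to\infty}(\Delta_{[s]\setminus u}{\boldsymbol\gamma})_u$ for ${\boldsymbol\gamma}\in\mathcal M_d$; with $\max\emptyset=0$, $\mathcal N_d=\{{\boldsymbol\gamma}\in\mathcal M_d:\gamma_u\to0\text{ as }\max u\to\infty\}$; $\mathcal P_d=\{{\boldsymbol\gamma}\in\mathcal M_d:\sum_{v}\gamma_v<\infty\}$; $\mathcal A_d=\{{\boldsymbol\gamma}\in\mathcal M_d:\lim_{r\to\infty}\lim_{s\to\infty}\Delta_{[s]\setminus[r]}{\boldsymbol\gamma}={\boldsymbol\gamma}\}$. *)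

(* Defs.v *)
From HB Require Import structures.
From mathcomp Require Import all_boot all_order all_algebra.
From mathcomp Require Import finmap.
From mathcomp Require Import all_classical all_reals all_analysis.
Set Implicit Arguments. Unset Strict Implicit. Unset Printing Implicit Defensive.
Import Order.TTheory GRing.Theory Num.Theory numFieldNormedType.Exports.
Local Open Scope ring_scope.
Local Open Scope fset_scope.
Local Open Scope classical_set_scope.

(* d in N ∪ {∞}: [Some n] is the finite dimension n, [None] is d = ∞. *)
Definition dimx := option nat.

Definition in_dim (d : dimx) (j : nat) : bool :=
  (1 <= j)%N && (match d with Some n => (j <= n)%N | None => true end).

Definition inU (d : dimx) (u : {fset nat}) : Prop := forall j, j \in u -> in_dim d j.

Definition segm (s : nat) : {fset nat} := seq_fset tt (iota 1 s).

Section Weights.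
Variable R : realType.

(* a family (γ_u)_{u ∈ U_d}; only values on U_d are relevant *)
Definition weight := {fset nat} -> R.

Definition Delta (v : {fset nat}) (gamma : weight) : weight :=
  fun u => \sum_(w <- fpowerset v) (-1) ^+ #|` w| * gamma (u `|` w)%fset.

Definition inW (d : dimx) (gamma : weight) : Prop :=
  forall u, inU d u -> 0 <= gamma u.

Definition inM (d : dimx) (gamma : weight) : Prop :=
  forall v, inU d v -> forall u, inU d u -> 0 <= Delta v gamma u.

Definition prodw (g : nat -> R) : weight := fun u => \prod_(j <- u) g j.

Definition product_seq (d : dimx) (g : nat -> R) : Prop :=
  (forall j, in_dim d j -> 0 <= g j) /\
  (forall i j, in_dim d i -> in_dim d j -> (i <= j)%N -> g j <= g i).

(* max u, with max ∅ = 0 *)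
Definition maxf (u : {fset nat}) : nat := \max_(j <- u) j.

Definition inN (d : dimx) (gamma : weight) : Prop :=
  inM d gamma /\
  forall e : R, 0 < e -> exists N : nat,
    forall u, inU d u -> (N <= maxf u)%N -> `|gamma u| < e.

Definition inP (d : dimx) (gamma : weight) : Prop :=
  inM d gamma /\ (\esum_(v in [set v | inU d v]) (gamma v)%:E < +oo)%E.

Definition Tdown (C : R) (gamma : weight) : weight :=
  fun u => C ^- (2 * #|` u|) *
           lim ((fun s : nat => Delta (segm s `\` u)%fset gamma u) @ \oo).

Definition inA (d : dimx) (gamma : weight) : Prop :=
  inM d gamma /\
  forall u, inU d u ->
    (fun r : nat => lim ((fun s : nat => Delta (segm s `\` segm r)%fset gamma u) @ \oo))
      @ \oo --> gamma u.

End Weights.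

(* Main.v *)
Require Import Defs.
From HB Require Import structures.
From mathcomp Require Import all_boot all_order all_algebra.
From mathcomp Require Import finmap.
From mathcomp Require Import all_classical all_reals all_analysis.
From mathcomp Require Import ring lra.
Set Implicit Arguments. Unset Strict Implicit. Unset Printing Implicit Defensive.
Import Order.TTheory GRing.Theory Num.Theory numFieldNormedType.Exports.
Local Open Scope ring_scope.
Local Open Scope fset_scope.
Local Open Scope classical_set_scope.
Local Open Scope fset_scope.
Local Open Scope ring_scope.


Lemma pow_perm (K : choiceType) (a : K) (A : {fset K}) : a \notin A ->
  perm_eq (fpowerset (a |` A)) (fpowerset A ++ map (fun w => a |` w) (fpowerset A)).
Proof.
move=> aA; apply: uniq_perm; first exact: fset_uniq.
  rewrite cat_uniq fset_uniq /=; apply/andP; split.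
    apply/hasPn => w /mapP [w' w'A ->]; rewrite fpowersetE.
    apply/negP => /fsubsetP /(_ a (fset1U1 _ _)) aA'.
    by move: aA'; rewrite (negbTE aA).
  rewrite map_inj_in_uniq ?fset_uniq // => w1 w2.
  rewrite !fpowersetE => /fsubsetP h1 /fsubsetP h2 e.
  have n1 : a \notin w1 by apply/negP => /h1; rewrite (negbTE aA).
  have n2 : a \notin w2 by apply/negP => /h2; rewrite (negbTE aA).
  by rewrite -(fsetU1K n1) -(fsetU1K n2) e.
move=> w; rewrite mem_cat fpowersetE.
apply/idP/idP.
  move=> wA; case: (boolP (a \in w)) => aw.
    apply/orP; right; apply/mapP; exists (w `\ a); last by rewrite fsetD1K.
    rewrite fpowersetE; apply/fsubsetP => x; rewrite in_fsetD1 => /andP [xa xw].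
    by move/fsubsetP: wA => /(_ x xw); rewrite in_fset1U (negbTE xa).
  apply/orP; left; rewrite fpowersetE; apply/fsubsetP => x xw.
  move/fsubsetP: wA => /(_ x xw); rewrite in_fset1U => /orP [/eqP xa|//].
  by move: aw; rewrite -xa xw.
case/orP.
  by rewrite fpowersetE => /fsubsetP h; apply/fsubsetP => x /h; exact: fset1Ur.
case/mapP => w' w'A ->; rewrite fpowersetE in w'A.
exact: fsetUS.
Qed.

Lemma sum_pow (V : zmodType) (K : choiceType) (a : K) (A : {fset K}) (F : {fset K} -> V) :
  a \notin A ->
  \sum_(w <- fpowerset (a |` A)) F w =
  \sum_(w <- fpowerset A) F w + \sum_(w <- fpowerset A) F (a |` w).
Proof. by move=> aA; rewrite (perm_big _ (@pow_perm _ _ _ aA)) big_cat big_map. Qed.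

Section W.
Variable R : realType.
Implicit Types (g : nat -> R).

Lemma Delta_rec g (a : nat) (X u : {fset nat}) : a \notin X ->
  Delta (a |` X) (prodw g) u = Delta X (prodw g) u - Delta X (prodw g) (a |` u).
Proof.
move=> aX; rewrite /Delta sum_pow //; congr (_ + _).
rewrite -sumrN big_seq [in RHS]big_seq; apply: eq_bigr => w.
rewrite fpowersetE => /fsubsetP wX.
have aw : a \notin w by apply/negP => /wX; rewrite (negbTE aX).
rewrite cardfsU1 aw /= exprS mulN1r mulNr; congr (- (_ * _)).
by rewrite fsetUA (fsetUC u [fset a]) -fsetUA.
Qed.

Lemma Delta_prod g (v u : {fset nat}) :
  Delta v (prodw g) u = prodw g u * \prod_(j <- v) (if j \in u then 0 else 1 - g j).
Proof.
elim/fset1U_rect: v u => [|a X aX IH] u.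
  by rewrite /Delta fpowerset0 big_seq_fset1 big_seq_fset0 fsetU0 cardfs0 expr0 !mul1r mulr1.
rewrite Delta_rec // !IH big_fsetU1 //=.
case: (boolP (a \in u)) => au.
  by rewrite (fsetUidPr _ _ _) ?fsub1set // subrr mul0r mulr0.
rewrite /prodw big_fsetU1 //=.
have -> : \prod_(j <- X) (if j \in a |` u then 0 else 1 - g j) =
          \prod_(j <- X) (if j \in u then 0 else 1 - g j).
  rewrite big_seq [in RHS]big_seq; apply: eq_bigr => j jX.
  rewrite in_fset1U; case: eqP => // ja; by move: aX; rewrite -ja jX.
ring.
Qed.

Lemma big_seq_fset_uniq (V : Type) (idx : V) (op : Monoid.com_law idx) (s : seq nat) (F : nat -> V) :
  uniq s -> \big[op/idx]_(j <- seq_fset tt s) F j = \big[op/idx]_(j <- s) F j.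
Proof.
move=> us; apply: perm_big; apply: uniq_perm; [exact: fset_uniq|exact: us|].
by move=> j; rewrite seq_fsetE.
Qed.

Lemma in_segm s j : (j \in segm s) = (1 <= j <= s)%N.
Proof. by rewrite /segm seq_fsetE mem_iota addnC addn1 ltnS. Qed.

Lemma big_segmD (V : Type) (idx : V) (op : Monoid.com_law idx) (s : nat) (u : {fset nat}) (F : nat -> V) :
  \big[op/idx]_(j <- segm s `\` u) F j = \big[op/idx]_(1 <= j < s.+1 | j \notin u) F j.
Proof.
rewrite -[RHS]big_filter /index_iota subSS subn0; apply: perm_big; apply: uniq_perm.
- exact: fset_uniq.
- by rewrite filter_uniq // iota_uniq.
by move=> j; rewrite in_fsetD in_segm mem_filter mem_iota addnC addn1 ltnS.
Qed.

Lemma prod_ineq (I : Type) (r : seq I) (F : I -> R) : (forall i, 0 <= F i <= 1) ->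
  [/\ 0 <= \prod_(i <- r) (1 - F i) <= 1, 0 <= \sum_(i <- r) F i,
      \prod_(i <- r) (1 - F i) * (1 + \sum_(i <- r) F i) <= 1 &
      1 - \sum_(i <- r) F i <= \prod_(i <- r) (1 - F i)].
Proof.
move=> F01; elim: r => [|a r [/andP [P0 P1] S0 H1 H2]].
  by rewrite !big_nil; split; rewrite ?ler01 ?lexx //= ?subr0 ?mul1r ?addr0 ?lexx.
rewrite !big_cons; have /andP [a0 a1] := F01 a.
set P := \prod_(i <- r) _ in P0 P1 H1 H2 *; set S := \sum_(i <- r) _ in S0 H1 H2 *.
split.
- apply/andP; split; nra.
- nra.
- nra.
- nra.
Qed.

Lemma prod_exp (I : Type) (r : seq I) (F : I -> R) : (forall i, 0 <= F i) ->
  \prod_(i <- r) (1 + F i) <= expR (\sum_(i <- r) F i).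
Proof.
move=> F0; elim: r => [|a r IH]; first by rewrite !big_nil expR0.
rewrite !big_cons expRD; apply: ler_pM => //.
- by rewrite addr_ge0.
- by apply: prodr_ge0 => i _; rewrite addr_ge0.
- exact: expR_ge1Dx.
Qed.

Lemma le_maxf (u : {fset nat}) j : j \in u -> (j <= maxf u)%N.
Proof. by move=> ju; rewrite /maxf; apply: (@leq_bigmax_seq _ _ _ (fun j => j)). Qed.

Definition xs g (u : {fset nat}) j : R := if (1 <= j)%N && (j \notin u) then g j else 0.
Definition Pq g u s : R := \prod_(1 <= j < s.+1) (1 - xs g u j).
Definition Sx g u s : R := \sum_(1 <= j < s.+1) xs g u j.
Definition ps g n : R := \sum_(1 <= j < n) g j.

Lemma Delta_segm g s u : Delta (segm s `\` u) (prodw g) u = prodw g u * Pq g u s.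
Proof.
rewrite Delta_prod big_segmD big_mkcond /Pq; congr (_ * _).
rewrite big_nat_cond [RHS]big_nat_cond; apply: eq_bigr => j /andP [/andP [j1 _] _].
by rewrite /xs j1 /=; case: (j \in u) => //=; rewrite subr0.
Qed.

Lemma Delta_segm2 g s r u : (maxf u <= r)%N ->
  Delta (segm s `\` segm r) (prodw g) u = prodw g u * Pq g (segm r) s.
Proof.
move=> ur; rewrite Delta_prod big_segmD big_mkcond /Pq; congr (_ * _).
rewrite big_nat_cond [RHS]big_nat_cond; apply: eq_bigr => j /andP [/andP [j1 _] _].
rewrite /xs j1 /=; case: (boolP (j \in segm r)) => jr /=; first by rewrite subr0.
have -> : (j \in u) = false.
  apply/negP => /le_maxf ju; move: jr; rewrite in_segm j1 /=.
  by rewrite (leq_trans ju ur).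
by [].
Qed.

Section G.
Variable g : nat -> R.
Hypothesis G01 : forall j, (1 <= j)%N -> 0 <= g j <= 1.

Lemma xs01 u j : 0 <= xs g u j <= 1.
Proof. by rewrite /xs; case: ifP => [/andP [/G01 //]|]; rewrite lexx ler01. Qed.

Lemma Pq_ineq u s : [/\ 0 <= Pq g u s <= 1, 0 <= Sx g u s,
      Pq g u s * (1 + Sx g u s) <= 1 & 1 - Sx g u s <= Pq g u s].
Proof. exact: prod_ineq (xs01 u). Qed.

Lemma Pq_noninc u : nonincreasing_seq (Pq g u).
Proof.
apply/nonincreasing_seqP => s; rewrite /Pq big_nat_recr //=.
have [/andP [P0 _] _ _ _] := Pq_ineq u s; have /andP [x0 x1] := xs01 u s.+1.
rewrite /Pq in P0; nra.
Qed.

Lemma Pq_cvg u : cvgn (Pq g u).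
Proof.
apply: nonincreasing_is_cvgn; first exact: Pq_noninc.
by exists 0 => _ [s _ <-]; have [/andP [] ] := Pq_ineq u s.
Qed.

Lemma ps_split a b : (1 <= a <= b)%N -> ps g b = ps g a + \sum_(a <= j < b) g j.
Proof. by move=> H; rewrite /ps -big_cat_nat //; case/andP: H. Qed.

Lemma sum_ge0 a b : (1 <= a)%N -> 0 <= \sum_(a <= j < b) g j.
Proof.
move=> a1; rewrite big_nat_cond; apply: sumr_ge0 => j /andP [/andP [aj _] _].
by have /andP [] := G01 (leq_trans a1 aj).
Qed.

Lemma ps_mono m n : (m <= n)%N -> ps g m <= ps g n.
Proof.
case: m => [|m] mn.
  by rewrite {1}/ps big_geq // sum_ge0.
by rewrite (@ps_split m.+1 n) ?mn // lerDl sum_ge0.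
Qed.

End G.
End W.

Section W.
Variable R : realType.
Section G.
Variable g : nat -> R.
Hypothesis G01 : forall j, (1 <= j)%N -> 0 <= g j <= 1.
Definition Ssum := (\sum_(1 <= j <oo) (g j)%:E)%E.

Lemma Ssum_sup : Ssum = ereal_sup (range (fun n => (ps g n)%:E)).
Proof.
rewrite /Ssum.
have -> : (fun n => (\sum_(1 <= j < n) (g j)%:E)%E) = (fun n => (ps g n)%:E).
  by apply/funext => n; rewrite sumEFin.
apply: cvg_lim => //; apply: ereal_nondecreasing_cvgn => m n mn.
by rewrite lee_fin ps_mono.
Qed.

Lemma SD1 : Ssum = +oo%E -> forall M, exists n, M < ps g n.
Proof.
rewrite Ssum_sup => H M.
have : (M%:E < ereal_sup (range (fun n => (ps g n)%:E)))%E by rewrite H ltey.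
by case/ereal_sup_gt => _ [n _ <-]; rewrite lte_fin => ?; exists n.
Qed.

Lemma Ssum_ge0 : (0 <= Ssum)%E.
Proof.
rewrite Ssum_sup; apply: (@le_trans _ _ (ps g 0)%:E).
  by rewrite /ps big_geq.
by apply: ereal_sup_ubound; exists 0%N.
Qed.

Lemma SD2 : (Ssum < +oo)%E -> exists l, (forall n, ps g n <= l) /\
   (forall e, 0 < e -> exists n, l - e < ps g n).
Proof.
move=> Slt; have Sf : Ssum \is a fin_num by rewrite ge0_fin_numE // Ssum_ge0.
exists (fine Ssum); split.
  move=> n; rewrite -lee_fin fineK // Ssum_sup.
  by apply: ereal_sup_ubound; exists n.
move=> e e0.
have : ((fine Ssum - e)%:E < ereal_sup (range (fun n => (ps g n)%:E)))%E.
  by rewrite -Ssum_sup -[X in (_ < X)%E]fineK // lte_fin ltrBlDr ltrDl.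
by case/ereal_sup_gt => _ [n _ <-]; rewrite lte_fin => ?; exists n.
Qed.

Lemma TL : (Ssum < +oo)%E -> forall e, 0 < e -> exists r, forall r', (r <= r')%N ->
  forall n, \sum_(1 <= j < n) (if (r' < j)%N then g j else 0) <= e.
Proof.
move=> /SD2 [l [lub lglb]] e e0; have [n0 Hn0] := lglb e e0.
exists n0 => r' r'n n.
case: (leqP n r'.+1) => nr.
  rewrite big_nat_cond big1; first exact: ltW.
  move=> j /andP [/andP [_ jn] _].
  by rewrite ifF //; apply/negbTE; rewrite -leqNgt -ltnS (leq_trans jn).
rewrite (@big_cat_nat _ _ _ r'.+1) //; last exact: ltnW.
rewrite big_nat_cond big1 ?add0r; last first.
  by move=> j /andP [/andP [_ jn] _]; rewrite ifF //; apply/negbTE; rewrite -leqNgt -ltnS.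
rewrite big_nat_cond (eq_bigr g); last by move=> j /andP [/andP [jr _] _]; rewrite jr.
rewrite -big_nat_cond.
have e1 : ps g n = ps g r'.+1 + \sum_(r'.+1 <= j < n) g j.
  by apply: ps_split; rewrite /= ltnW.
have h1 := lub n; have h2 : ps g n0 <= ps g r'.+1 by apply: ps_mono => //; exact: leqW.
rewrite Monoid.simpm.
lra.
Qed.

End G.
End W.

Section W.
Variable R : realType.
Section G.
Variable g : nat -> R.
Hypothesis G01 : forall j, (1 <= j)%N -> 0 <= g j <= 1.

Lemma LP0 : Ssum g = +oo%E -> forall u, Pq g u s @[s --> \oo] --> 0.
Proof.
move=> Soo u; apply/cvgrPdist_le => e e0.
set m := maxf u.
have [n1 Hn1] := SD1 G01 Soo (ps g m.+1 + e^-1).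
exists (maxn n1 m) => // s /=; rewrite geq_max => /andP [n1s ms].
have [/andP [P0 P1] S0 H1 H2] := Pq_ineq G01 u s.
rewrite sub0r normrN ger0_norm //.
have HS : ps g s.+1 - ps g m.+1 <= Sx g u s.
  rewrite /Sx (@big_cat_nat _ _ _ m.+1) //= ?ltnS //.
  have -> : \sum_(m.+1 <= i < s.+1) xs g u i = \sum_(m.+1 <= i < s.+1) g i.
    rewrite big_nat_cond [RHS]big_nat_cond; apply: eq_bigr => j /andP [/andP [mj _] _].
    rewrite /xs ifT //; apply/andP; split; first exact: leq_trans mj.
    by apply/negP => /le_maxf jm; move: mj; rewrite ltnNge jm.
  have e1 : ps g s.+1 = ps g m.+1 + \sum_(m.+1 <= j < s.+1) g j.
    by apply: ps_split; rewrite /= ltnS.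
  have : 0 <= \sum_(1 <= i < m.+1) xs g u i.
    by apply: sumr_ge0 => j _; have /andP [] := xs01 G01 u j.
  lra.
have h2 : ps g n1 <= ps g s.+1 by apply: ps_mono => //; exact: leqW.
have ee : e * e^-1 = 1 by rewrite mulfV // gt_eqF.
have ie : 0 < e^-1 by rewrite invr_gt0.
nra.
Qed.

Lemma lim_mul (c : R) (f : nat -> R) : cvgn f -> lim ((fun s => c * f s) @ \oo) = c * lim (f @ \oo).
Proof. by move=> cf; apply: cvg_lim => //; apply: cvgMr. Qed.

Lemma Tdown_eq C u : Tdown C (prodw g) u = C ^- (2 * #|`u|) * (prodw g u * lim (Pq g u @ \oo)).
Proof.
rewrite /Tdown; congr (_ * _).
have -> : (fun s => Delta (segm s `\` u) (prodw g) u) = (fun s => prodw g u * Pq g u s).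
  by apply/funext => s; exact: Delta_segm.
by rewrite lim_mul //; exact: Pq_cvg.
Qed.

Lemma XS_le u r j : (forall j, (1 <= j <= r)%N -> j \in u \/ g j = 0) ->
  xs g u j <= (if (r < j)%N then g j else 0).
Proof.
move=> H; rewrite /xs; case: (boolP ((1 <= j)%N && (j \notin u))) => [/andP [j1 ju]|_].
  case: ltnP => // jr.
  have [jj|->//] : j \in u \/ g j = 0 by apply: H; rewrite j1 jr.
  by move: ju; rewrite jj.
case: ifP => // rj; have j1 : (1 <= j)%N by exact: (leq_trans _ rj).
by have /andP [] := G01 j1.
Qed.

Lemma Pq_lim u r e : (forall j, (1 <= j <= r)%N -> j \in u \/ g j = 0) ->
  (forall n, \sum_(1 <= j < n) (if (r < j)%N then g j else 0) <= e) ->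
  1 - e <= lim (Pq g u @ \oo) <= 1.
Proof.
move=> H He; apply/andP; split.
  apply: limr_ge; first exact: Pq_cvg.
  apply: nearW => s; have [_ _ _ H2] := Pq_ineq G01 u s.
  have : Sx g u s <= e.
    apply: le_trans (He s.+1); apply: ler_sum => j _; exact: XS_le.
  lra.
apply: limr_le; first exact: Pq_cvg.
by apply: nearW => s; have [/andP [_ ->] _ _ _] := Pq_ineq G01 u s.
Qed.

Lemma partb C : 0 < C ->
  ((forall u, inU None u -> Tdown C (prodw g) u = 0) <-> Ssum g = +oo%E).
Proof.
move=> C0; split; last first.
  by move=> Soo u _; rewrite Tdown_eq (cvg_lim _ (LP0 Soo u)) // !mulr0.
move=> H; apply/eqP; apply/negPn/negP => Sne.
have Slt : (Ssum g < +oo)%E by rewrite lt_neqAle Sne leey.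
have h2 : 0 < 2^-1 :> R by rewrite invr_gt0.
have [r Hr] := TL G01 Slt h2.
set u := [fset j in segm r | g j != 0].
have uU : inU None u.
  move=> j; rewrite !inE /= => /andP [jr _]; rewrite /in_dim andbT.
  by move: jr; rewrite in_segm => /andP [].
have := H u uU; rewrite Tdown_eq; apply/eqP.
apply: mulf_neq0; first by apply: lt0r_neq0; rewrite invr_gt0 exprn_gt0.
apply: mulf_neq0.
- apply: lt0r_neq0; rewrite /prodw big_seq; apply: prodr_gt0 => j.
  rewrite !inE /= => /andP [jr gj]; rewrite lt0r gj /=.
  move: jr; rewrite in_segm => /andP [j1 _]; by have /andP [] := G01 j1.
- have Hu : forall j, (1 <= j <= r)%N -> j \in u \/ g j = 0.
    move=> j /andP [j1 jr]; case: (eqVneq (g j) 0) => gj; [by right | left].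
    by rewrite !inE /= gj andbT in_segm j1 jr.
  have /andP [hl _] := Pq_lim Hu (Hr r (leqnn r)).
  apply: lt0r_neq0; apply: lt_le_trans hl.
  have : 2^-1 + 2^-1 = 1 :> R by field.
  lra.
Qed.

Lemma partc1 : inM None (prodw g) -> (inA None (prodw g) <-> (Ssum g < +oo)%E).
Proof.
move=> HM; split.
  case=> _ HA; rewrite lt_neqAle leey andbT; apply/negP => /eqP Soo.
  have f0 : inU None fset0 by move=> j; rewrite in_fset0.
  have := HA fset0 f0.
  have -> : (fun r => lim ((fun s => Delta (segm s `\` segm r) (prodw g) fset0) @ \oo))
      = (fun _ => 0).
    apply/funext => r.
    rewrite (_ : (fun s => _) = (fun s => prodw g fset0 * Pq g (segm r) s)); last first.
      by apply/funext => s; apply: Delta_segm2; rewrite /maxf big_seq_fset0.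
    rewrite lim_mul ?(cvg_lim _ (LP0 Soo _)) ?mulr0 //.
    exact: LP0.
  move=> Hc; have := cvg_lim _ Hc; rewrite lim_cst // /prodw big_seq_fset0 => h.
  have h' : (0:R) = 1 by apply: h; exact: _.
  by have := @oner_neq0 R; rewrite -h' eqxx.
move=> Slt; split => // u uU; apply/cvgrPdist_le => e e0.
set c := prodw g u.
have c0 : 0 <= c.
  rewrite /c /prodw big_seq; apply: prodr_ge0 => j ju.
  by have := uU j ju; rewrite /in_dim andbT => /G01 /andP [].
set e' := e / (c + 1).
have c1 : 0 < c + 1 by rewrite ltr_wpDl.
have e'0 : 0 < e' by rewrite divr_gt0.
have [r0 Hr0] := TL G01 Slt e'0.
exists (maxn r0 (maxf u)) => // r /=; rewrite geq_max => /andP [r0r mr].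
rewrite (_ : (fun s => _) = (fun s => c * Pq g (segm r) s)); last first.
  by apply/funext => s; exact: Delta_segm2.
rewrite lim_mul; last exact: Pq_cvg.
have Hu : forall j, (1 <= j <= r)%N -> j \in segm r \/ g j = 0.
  by move=> j jr; left; rewrite in_segm.
have /andP [l1 l2] := Pq_lim Hu (Hr0 r r0r).
set L := lim _ in l1 l2 *.
rewrite -{1}(mulr1 c) -mulrBr normrM (ger0_norm c0) ger0_norm ?subr_ge0 //.
have ee : e' * (c + 1) = e by rewrite /e' divfK // gt_eqF.
nra.
Qed.

End G.
End W.

Lemma big_seqf (K : choiceType) (V : Type) (idx : V) (op : Monoid.com_law idx) (s : seq K) (F : K -> V) :
  uniq s -> \big[op/idx]_(j <- seq_fset tt s) F j = \big[op/idx]_(j <- s) F j.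
Proof.
move=> us; apply: perm_big; apply: uniq_perm; [exact: fset_uniq|exact: us|].
by move=> j; rewrite seq_fsetE.
Qed.

Lemma maxf_in (u : {fset nat}) : maxf u = 0%N \/ maxf u \in u.
Proof.
elim/fset1U_rect: u => [|a X aX IH]; first by left; rewrite /maxf big_seq_fset0.
right; have -> : maxf (a |` X) = maxn a (maxf X) by rewrite /maxf big_fsetU1.
case: (leqP (maxf X) a) => h.
  by rewrite fset1U1.
case: IH => [e|]; last exact: fset1Ur.
by move: h; rewrite e.
Qed.

Section W.
Variable R : realType.

Lemma sub_sum_le (K : choiceType) (A B : {fset K}) (f : K -> R) : (A `<=` B)%fset ->
  (forall x, x \in B -> 0 <= f x) -> \sum_(x <- A) f x <= \sum_(x <- B) f x.
Proof.
move=> AB f0; rewrite [X in _ <= X](big_fsetID _ (mem A)) /=.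
have -> : \sum_(i <- [fset x in B | x \in A]) f i = \sum_(x <- A) f x.
  apply: eq_fbigl => x; rewrite !inE /=; apply/andP/idP => [[] //|xA].
  by split => //; move/fsubsetP: AB; apply.
rewrite lerDl big_seq; apply: sumr_ge0 => x; rewrite !inE /= => /andP [xB _].
exact: f0.
Qed.

Lemma prod_exp2 (r : seq nat) (F : nat -> R) : (forall i, i \in r -> 0 <= F i) ->
  \prod_(i <- r) (1 + F i) <= expR (\sum_(i <- r) F i).
Proof.
elim: r => [|a r IH] F0; first by rewrite !big_nil expR0.
have Fa : 0 <= F a by apply: F0; rewrite mem_head.
have Fr : forall i, i \in r -> 0 <= F i by move=> i ir; apply: F0; rewrite in_cons ir orbT.
rewrite !big_cons expRD; apply: ler_pM => //.
- by rewrite addr_ge0.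
- by rewrite big_seq; apply: prodr_ge0 => i /Fr ?; rewrite addr_ge0.
- exact: expR_ge1Dx.
- exact: IH.
Qed.

Section G.
Variable g : nat -> R.
Hypothesis G01 : forall j, (1 <= j)%N -> 0 <= g j <= 1.

Lemma sum_pow_prod (A : {fset nat}) :
  \sum_(w <- fpowerset A) prodw g w = \prod_(j <- A) (1 + g j).
Proof.
elim/fset1U_rect: A => [|a X aX IH].
  by rewrite fpowerset0 big_seq_fset1 big_seq_fset0 /prodw big_seq_fset0.
rewrite sum_pow // big_fsetU1 //= -IH mulrDl mul1r; congr (_ + _).
rewrite big_distrr /= big_seq [RHS]big_seq; apply: eq_bigr => w.
rewrite fpowersetE => /fsubsetP wX.
have aw : a \notin w by apply/negP => /wX; rewrite (negbTE aX).
by rewrite /prodw big_fsetU1.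
Qed.

Lemma partA : inM None (prodw g) -> (inN None (prodw g) <-> g @ \oo --> 0).
Proof.
move=> HM; split.
  case=> _ HN; apply/cvgrPdist_lt => e e0.
  have [N HNe] := HN e e0.
  exists (maxn N 1) => // j /=; rewrite geq_max => /andP [Nj j1].
  have jU : inU None [fset j] by move=> i; rewrite in_fset1 => /eqP ->; rewrite /in_dim j1.
  have := HNe [fset j] jU; rewrite /maxf /prodw !big_seq_fset1 sub0r normrN.
  by apply.
move=> H; split => // e e0.
move/cvgrPdist_lt: H => /(_ e e0) [N _ HN].
exists (maxn N 1) => u uU; rewrite geq_max => /andP [Nm m1].
have mu : maxf u \in u by case: (maxf_in u) => // e1; move: m1; rewrite e1.
have g0 : forall j, j \in u -> 0 <= g j <= 1.
  by move=> j /uU; rewrite /in_dim andbT => /G01.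
have := HN _ Nm; rewrite /= sub0r normrN.
rewrite /prodw (big_fsetD1 _ mu) /=.
have P0 : 0 <= \prod_(i <- u `\ maxf u) g i.
  rewrite big_seq; apply: prodr_ge0 => i; rewrite in_fsetD1 => /andP [_ /g0 /andP []] //.
have P1 : \prod_(i <- u `\ maxf u) g i <= 1.
  rewrite big_seq; apply: prodr_ile1 => i; rewrite in_fsetD1 => /andP [_ /g0] //.
have /andP [gm0 gm1] := g0 _ mu.
rewrite ger0_norm ?mulr_ge0 // ger0_norm //.
  nra.
exact: mulr_ge0.
Qed.

End G.
End W.

Section W.
Variable R : realType.
Section G.
Variable g : nat -> R.
Hypothesis G01 : forall j, (1 <= j)%N -> 0 <= g j <= 1.

Lemma partP : inM None (prodw g) -> ((Ssum g < +oo)%E <-> inP None (prodw g)).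
Proof.
move=> HM; split.
  move=> Slt; have [l [lub _]] := SD2 G01 Slt; split => //.
  apply: (@le_lt_trans _ _ (expR l)%:E); last exact: ltey.
  apply: ge_ereal_sup => _ [X [finX XD] <-].
  rewrite fsbig_finite // sumEFin lee_fin.
  set F := fset_set X.
  set N := \max_(v <- F) maxf v.
  have sub : (F `<=` fpowerset (segm N))%fset.
    apply/fsubsetP => v vF.
    have Xv : X v by move: vF; rewrite in_fset_set // inE.
    rewrite fpowersetE; apply/fsubsetP => j jv; rewrite in_segm.
    have := XD v Xv j jv; rewrite /in_dim andbT => -> /=.
    apply: leq_trans (le_maxf jv) _.
    exact: (@leq_bigmax_seq _ _ _ maxf v vF).
  apply: le_trans (sub_sum_le sub _) _.
    move=> v; rewrite fpowersetE => /fsubsetP vs; rewrite /prodw big_seq.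
    apply: prodr_ge0 => j /vs; rewrite in_segm => /andP [j1 _].
    by have /andP [] := G01 j1.
  rewrite sum_pow_prod; apply: le_trans (prod_exp2 _) _.
    move=> i; rewrite in_segm => /andP [i1 _]; by have /andP [] := G01 i1.
  rewrite ler_expR.
  have -> : \sum_(i <- segm N) g i = ps g N.+1.
    by rewrite /segm big_seqf ?iota_uniq // /ps /index_iota subSS subn0.
  exact: lub.
case=> _ HP; apply: le_lt_trans HP; rewrite Ssum_sup //.
apply: ge_ereal_sup => _ [n _ <-].
apply: esum_ge.
set F := seq_fset tt [seq [fset j] | j <- iota 1 n.-1].
exists [set` F].
  split; first exact: finite_fset.
  move=> v /=; rewrite seq_fsetE => /mapP [j jI ->] i; rewrite in_fset1 => /eqP ->.
  by move: jI; rewrite mem_iota /in_dim andbT => /andP [].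
rewrite fsbig_finite ?finite_fset // set_fsetK big_seqf; last first.
  by rewrite map_inj_uniq ?iota_uniq //; exact: fset1_inj.
rewrite big_map sumEFin lee_fin /ps /index_iota subn1.
by rewrite le_eqVlt; apply/orP; left; apply/eqP; apply: eq_bigr => j _; rewrite /prodw big_seq_fset1.
Qed.

End G.
End W.

Unset Implicit Arguments.
Local Open Scope ring_scope.
Local Open Scope fset_scope.
Local Open Scope classical_set_scope.
Theorem mainTheorem6 (R : realType) (d : dimx) (g : nat -> R) :
  product_seq d g ->
  (forall u v : {fset nat}, inU d u -> inU d v -> [disjoint u & v]%fset ->
     Delta v (prodw g) u = prodw g u * \prod_(j <- v) (1 - g j)) /\
  (inM d (prodw g) <-> (forall j, in_dim d j -> 0 <= g j <= 1)) /\
  (d = None -> inM d (prodw g) ->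
     (inN d (prodw g) <-> g @ \oo --> 0) /\
     (forall C : R, 0 < C ->
        ((forall u, inU d u -> Tdown C (prodw g) u = 0) <->
         (\sum_(1 <= j <oo) (g j)%:E = +oo)%E)) /\
     ((inA d (prodw g) <-> (\sum_(1 <= j <oo) (g j)%:E < +oo)%E) /\
      ((\sum_(1 <= j <oo) (g j)%:E < +oo)%E <-> inP d (prodw g)))).
Proof.
move=> [g0 gmono].
have single : forall j, in_dim d j -> inU d [fset j].
  by move=> j jd i; rewrite in_fset1 => /eqP ->.
have f0 : inU d fset0 by move=> i; rewrite in_fset0.
have HMiff : inM d (prodw g) <-> (forall j, in_dim d j -> 0 <= g j <= 1).
  split.
    move=> HM j jd; apply/andP; split; first exact: g0.
    have := HM [fset j] (single j jd) fset0 f0.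
    by rewrite Delta_prod /prodw big_seq_fset0 big_seq_fset1 mul1r subr_ge0.
  move=> H v vU u uU; rewrite Delta_prod; apply: mulr_ge0.
    rewrite /prodw big_seq; apply: prodr_ge0 => j /uU /H /andP [] //.
  rewrite big_seq; apply: prodr_ge0 => j jv; case: ifP => _ //.
  by rewrite subr_ge0; have /andP [] := H j (vU j jv).
split.
  move=> u v uU vU /fdisjointP dj; rewrite Delta_prod; congr (_ * _).
  rewrite big_seq [RHS]big_seq; apply: eq_bigr => j jv.
  by case: ifP => // ju; move: (dj j ju); rewrite jv.
split => // dN HM; subst d.
have G01 : forall j, (1 <= j)%N -> 0 <= g j <= 1.
  by move=> j j1; apply: (proj1 HMiff HM); rewrite /in_dim j1.
split; first exact: partA G01 HM.
split; first by move=> C C0; have H := partb G01 C0; rewrite /Ssum in H; exact: H.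
split; first exact: partc1 G01 HM.
exact: partP G01 HM.
Qed.
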